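(* Let $n>24$, $0<\epsilon<\frac13$, $\delta>0$, $s>0$, and $m=\epsilon^{-2}n^{1+\delta}$ (assumed to be an integer). Let $$A=\left\{y\in U^m:\ \left|\sum_{i=1}^n\frac{k_i(y)(k_i(y)-1)}{m(m-1)}\cdot\frac1{\|p\|^2}-1\right|\le 3\epsilon\right\}$$ and $C_s=\{x\in U^m: d_T(x,A)<s\}$. Then for every $x\in C_s$ there is $y\in A$ such that $$\left|\sum_{i=1}^n\frac{k_i(x)(k_i(x)-1)}{m(m-1)}-\sum_{i=1}^n\frac{k_i(y)(k_i(y)-1)}{m(m-1)}\right|\le \epsilon\,\|p\|^2\left(\frac{6s}{n^{\delta/2}}+\frac{5s^2\epsilon}{n^{\delta}}\right).$$
   Context: Standing setup: $U$ is a finite set (the key space) with a probability measure $q$; $T=\{1,\dots,n\}$; $h:U\to T$ is an arbitrary function. $p_i=\sum_{u\in h^{-1}(i)}q(u)$ and $\|p\|^2=\sum_{i=1}^n p_i^2$. For $x=(x_1,\dots,x_m)\in U^m$, $k_i(x)=|\{j: h(x_j)=i\}|$. Talagrand's convex distance: $d_T(x,A)=\sup\{\inf_{y\in A}\sum_{j=1}^m\alpha_j\mathbf 1(x_j\ne y_j)\ :\ \alpha\in\mathbb R^m,\ \sum_j\alpha_j^2\le 1\}$, where $\mathbf 1(x_j\ne y_j)$ is $1$ if $x_j\ne y_j$ and $0$ otherwise. *)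

(* Defs.v *)
From HB Require Import structures.
From mathcomp Require Import all_boot all_order all_algebra.
From mathcomp Require Import all_classical all_reals.
From mathcomp Require Import ereal exp.
Set Implicit Arguments. Unset Strict Implicit. Unset Printing Implicit Defensive.
Import Order.TTheory GRing.Theory Num.Theory.
Local Open Scope ring_scope.
Local Open Scope classical_set_scope.

(* T = {1..n} is modelled by 'I_n; a point of U^m is a finite function 'I_m -> U. *)

Definition kcount (U : finType) (n m : nat) (h : U -> 'I_n)
  (x : {ffun 'I_m -> U}) (i : 'I_n) : nat :=
  #|[set j : 'I_m | h (x j) == i]|.

Definition pmass (R : realType) (U : finType) (n : nat) (q : U -> R)
  (h : U -> 'I_n) (i : 'I_n) : R :=
  \sum_(u | h u == i) q u.

Definition pnorm2 (R : realType) (U : finType) (n : nat) (q : U -> R)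
  (h : U -> 'I_n) : R :=
  \sum_(i < n) (pmass q h i) ^+ 2.

Definition collstat (R : realType) (U : finType) (n m : nat) (h : U -> 'I_n)
  (x : {ffun 'I_m -> U}) : R :=
  \sum_(i < n) ((kcount h x i)%:R * ((kcount h x i)%:R - 1))
                 / (m%:R * (m%:R - 1)).

(* Talagrand's convex distance, valued in the extended reals
   (so that d_T(x, emptyset) = +oo, the usual convention). *)
Definition dT (R : realType) (U : finType) (m : nat)
  (x : {ffun 'I_m -> U}) (A : set {ffun 'I_m -> U}) : \bar R :=
  ereal_sup [set ereal_inf [set ((\sum_(j < m) alpha j * (x j != y j)%:R)%:E)
                            | y in A]
            | alpha in [set alpha : 'I_m -> R | \sum_(j < m) alpha j ^+ 2 <= 1]].

Definition Aset (R : realType) (U : finType) (n m : nat) (q : U -> R)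
  (h : U -> 'I_n) (eps : R) : set {ffun 'I_m -> U} :=
  [set y | `| @collstat R U n m h y / pnorm2 q h - 1 | <= 3 * eps].

Definition Cset (R : realType) (U : finType) (n m : nat) (q : U -> R)
  (h : U -> 'I_n) (eps s : R) : set {ffun 'I_m -> U} :=
  [set x | (@dT R U m x (@Aset R U n m q h eps) < s%:E)%E].

(* Main.v *)
Require Import Defs.
From HB Require Import structures.
From mathcomp Require Import all_boot all_order all_algebra.
From mathcomp Require Import all_classical all_reals.
From mathcomp Require Import ereal exp.
From mathcomp Require Import ring lra.
Import Order.TTheory GRing.Theory Num.Theory.
Local Open Scope ring_scope.
Lemma part_card (m n : nat) (f : 'I_m -> 'I_n) (P : pred 'I_m) :
  (\sum_(i < n) #|[set j | P j && (f j == i)]| = #|[set j | P j]|)%N.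
Proof.
rewrite cardsE -sum1_card (partition_big f predT) //=.
by apply: eq_bigr => i _; rewrite cardsE -sum1_card.
Qed.

Lemma sq_bound (R : realType) (n : nat) (K L e : 'I_n -> R) :
  (forall i, 0 <= K i) -> (forall i, 0 <= e i) -> (forall i, 0 <= L i) ->
  (forall i, L i <= K i + e i) ->
  \sum_i L i ^+ 2 - \sum_i K i ^+ 2 <=
    (\sum_i e i) * (2 * Num.sqrt (\sum_i K i ^+ 2) + \sum_i e i).
Proof.
move=> K0 e0 L0 LK.
set w := Num.sqrt _; set d := \sum_i e i.
have w0 : 0 <= w by apply: sqrtr_ge0.
have Sge0 : 0 <= \sum_i K i ^+ 2 by apply: sumr_ge0 => i _; apply: sqr_ge0.
have w2 : w ^+ 2 = \sum_i K i ^+ 2 by rewrite sqr_sqrtr.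
have Kw : forall i, K i <= w.
  move=> i; have : K i ^+ 2 <= w ^+ 2.
    rewrite w2 (bigD1 i) //= lerDl; apply: sumr_ge0 => j _; apply: sqr_ge0.
  have := K0 i; nra.
have ed : forall i, e i <= d.
  move=> i; rewrite /d (bigD1 i) //= lerDl; apply: sumr_ge0 => j _; exact: e0.
rewrite -sumrB mulr_suml; apply: ler_sum => i _.
have := K0 i; have := e0 i; have := L0 i; have := LK i; have := Kw i; have := ed i.
nra.
Qed.
Lemma final_arith (R : realType) (m n P eps s r d w sg : R) :
  0 < eps -> 0 < s -> 0 < r -> 0 <= d -> 0 <= w -> 0 <= sg ->
  sg ^+ 2 = m -> d <= s * sg -> w ^+ 2 <= 2 * P * (m * (m - 1)) + m ->
  1 <= P * n -> 0 < P -> eps ^+ 2 * m = n * r ^+ 2 -> n + 1 <= m -> 1 <= n ->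
  d * (2 * w + d) / (m * (m - 1)) <=
    eps * P * (6 * s / r + 5 * s ^+ 2 * eps / r ^+ 2).
Proof.
move=> e0 s0 r0 d0 w0 sg0 sgm dsg w2 Pn P0 em nm n1.
set M := m * (m - 1).
have M0 : 0 < M by rewrite /M; nra.
rewrite ler_pdivrMr //.
have r20 : 0 < r ^+ 2 by rewrite exprn_gt0.
have ha : d ^+ 2 <= M * (eps * P * (5 * s ^+ 2 * eps / r ^+ 2)).
  have -> : M * (eps * P * (5 * s ^+ 2 * eps / r ^+ 2))
          = 5 * s ^+ 2 * (m - 1) * P * ((eps ^+ 2 * m) / r ^+ 2).
    by rewrite /M; field; rewrite gt_eqF.
  rewrite em mulfK ?gt_eqF //.
  have : d ^+ 2 <= s ^+ 2 * m.
    rewrite -sgm -exprMn; apply: lerXn2r => //; rewrite ?nnegrE //; nra.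
  have s20 : 0 <= s ^+ 2 by apply: sqr_ge0.
  have h5 : s ^+ 2 * (m - 1) <= s ^+ 2 * (m - 1) * (P * n).
    by rewrite ler_peMr //; nra.
  nra.
have hb : sg * w <= 3 * M * eps * P / r.
  have Z0 : 0 <= 3 * M * eps * P / r.
    apply: divr_ge0; last lra.
    have : 0 <= 3 * M * eps by nra.
    nra.
  suff : (sg * w) ^+ 2 <= (3 * M * eps * P / r) ^+ 2.
    have : 0 <= sg * w by nra.
    move=> h1 h2; rewrite -(ler_pXn2r (_ : 0 < 2)%N) ?nnegrE //.
  have -> : (3 * M * eps * P / r) ^+ 2 = 9 * M ^+ 2 * P ^+ 2 * ((eps ^+ 2 * m) / r ^+ 2) / m.
    rewrite /M; field; rewrite !gt_eqF //; nra.
  rewrite em mulfK ?gt_eqF // exprMn sgm.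
  rewrite ler_pdivlMr; last nra.
  rewrite /M.
  have t1 : 1 <= P * (m - 1) by nra.
  have h3 : m * w ^+ 2 <= m * (2 * P * (m * (m - 1)) + m) by rewrite ler_pM2l; [|nra].
  suff : m * (2 * P * (m * (m - 1)) + m) * m <= 9 * (m * (m - 1)) ^+ 2 * P ^+ 2 * n by nra.
  have h4 : 2 * P * m * (m-1) + m <= 9 * (m-1)^+2 * P ^+ 2 * n.
    have tP : 0 <= (m-1)^+2 * P by nra.
    have g1 : (m-1)^+2 * P <= (m-1)^+2 * P * (P * n) by rewrite ler_peMr.
    have g2 : 2 * P * m * (m-1) <= 4 * (m-1)^+2 * P by nra.
    have g3 : m <= 2 * (m-1) * (P * (m - 1)) by nra.
    nra.
  nra.
have : 2 * d * w <= 2 * (s * sg) * w by nra.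
move: ha hb; rewrite /M.
set A := eps * P * (5 * s ^+ 2 * eps / r ^+ 2).
have -> : 3 * (m * (m - 1)) * eps * P / r = (m * (m - 1)) * (eps * P * (6 * s / r)) / (2 * s).
  field; rewrite !gt_eqF //.
move=> ha hb hc.
have hb' : 2 * s * (sg * w) <= m * (m - 1) * (eps * P * (6 * s / r)).
  by rewrite mulrC -ler_pdivlMr; [|lra].
have -> : eps * P * (6 * s / r + 5 * s ^+ 2 * eps / r ^+ 2) * (m*(m-1)) = m*(m-1)*(eps*P*(6*s/r)) + m*(m-1)*A by rewrite /A; ring.
have -> : d * (2 * w + d) = 2 * d * w + d ^+ 2 by ring.
have : 2 * (s * sg) * w = 2 * s * (sg * w) by ring.
lra.
Qed.

Lemma kcountE (U : finType) (n m : nat) (h : U -> 'I_n) (x : {ffun 'I_m -> U}) i :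
  kcount h x i = #|[set j | h (x j) == i]|.
Proof.
apply: eq_card => j; rewrite inE.
by apply/idP/idP => H; [move: H; rewrite in_setE | rewrite in_setE].
Qed.

Local Open Scope classical_set_scope.

Theorem lemma4 (R : realType) (U : finType) (q : U -> R) (n : nat)
  (h : U -> 'I_n) (eps delta s : R) (m : nat)
  (q_ge0 : forall u, 0 <= q u) (q_sum1 : \sum_(u : U) q u = 1)
  (hn : (24 < n)%N) (heps0 : 0 < eps) (heps1 : eps < 1 / 3)
  (hdelta : 0 < delta) (hs : 0 < s)
  (hm : m%:R = eps ^-2 * (n%:R `^ (1 + delta))) :
  forall x, x \in @Cset R U n m q h eps s ->
  exists2 y, y \in @Aset R U n m q h eps &
    `| @collstat R U n m h x - @collstat R U n m h y |
      <= eps * pnorm2 q h *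
         (6 * s / (n%:R `^ (delta / 2)) + 5 * s ^+ 2 * eps / (n%:R `^ delta)).
Proof.
move=> x xC.
set P := pnorm2 q h.
have n25 : 25 <= n%:R :> R by rewrite (ler_nat R 25).
have n0 : 0 < n%:R :> R by lra.
have sp1 : \sum_(i < n) pmass q h i = 1.
  by rewrite -q_sum1 (partition_big h predT).
have Pn : 1 <= P * n%:R.
  have : 0 <= \sum_(i < n) (pmass q h i - n%:R^-1) ^+ 2.
    by apply: sumr_ge0 => i _; apply: sqr_ge0.
  rewrite (eq_bigr (fun i => pmass q h i ^+ 2 + ((- (2 * n%:R^-1)) * pmass q h i
              + n%:R^-1 ^+ 2))); last by move=> i _; ring.
  rewrite big_split big_split /= -mulr_sumr sp1 sumr_const card_ord -/P.
  have -> : n%:R^-1 ^+ 2 *+ n = n%:R^-1 :> R.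
    by rewrite -mulr_natr; field; rewrite gt_eqF.
  move=> h1; rewrite -ler_pdivrMr // div1r.
change (\sum_(i < n) pmass q h i ^+ 2) with P in h1.
lra.
have P0 : 0 < P.
  have : 0 <= P by apply: sumr_ge0 => i _; apply: sqr_ge0.
  move=> h0; rewrite lt_def h0 andbT; apply/eqP => P0; move: Pn; rewrite P0 mul0r; lra.
set r := n%:R `^ (delta / 2).
have r1 : 1 <= r.
  have n1 : 1 <= n%:R :> R by lra.
  have hd2 : 0 <= delta / 2 by lra.
  have := ler_powR n1 hd2.
  by rewrite powRr0.
have r2 : r ^+ 2 = n%:R `^ delta.
  rewrite /r -powR_mulrn ?powR_ge0 // -powRrM; congr (_ `^ _).
  by rewrite divfK // pnatr_eq0.
have nd : n%:R `^ (1 + delta) = n%:R * r ^+ 2.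
  rewrite powRD; last by apply/implyP => _; rewrite gt_eqF.
  by rewrite powRr1 ?r2 //; lra.
have em : eps ^+ 2 * m%:R = n%:R * r ^+ 2.
  rewrite hm nd; field; rewrite gt_eqF //.
have m0 : 0 <= m%:R :> R by apply: ler0n.
have nm : n%:R + 1 <= m%:R :> R.
  have : n%:R <= n%:R * r ^+ 2 :> R by rewrite ler_peMr; nra.
  have : eps ^+ 2 <= 1/9 by nra.
  nra.
move: xC; rewrite in_setE /Cset /= /dT => hlt.
pose sg := Num.sqrt (m%:R : R).
have sg2 : sg ^+ 2 = m%:R by rewrite sqr_sqrtr.
have sg0 : 0 < sg by rewrite sqrtr_gt0; lra.
pose alpha := fun _ : 'I_m => sg^-1.
have ha : \sum_(j < m) alpha j ^+ 2 <= 1.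
  rewrite /alpha sumr_const card_ord -mulr_natl exprVn sg2 mulfV //; lra.
have : (ereal_inf [set ((\sum_(j < m) alpha j * (x j != y j)%:R)%:E)
          | y in @Aset R U n m q h eps] < s%:E)%E.
  by apply: le_lt_trans hlt; apply: ereal_sup_ubound; exists alpha.
case/ereal_inf_lt => _ [y yA <-]; rewrite lte_fin => hy.
exists y; first by rewrite in_setE.
set d := (#|[set j | x j != y j]%SET|)%:R : R.
have dE : \sum_(j < m) ((x j != y j) : nat)%:R = d.
  rewrite /d -natr_sum cardsE -sum1_card; congr (_ %:R); rewrite [RHS]big_mkcond /=.
  apply: eq_bigr => j _.
  by rewrite unfold_in; case: (x j != y j).
have dsg : d <= s * sg.
  move: hy; rewrite /alpha -mulr_sumr dE mulrC -/(d / sg) ltr_pdivrMr //.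
  by move/ltW.
have d0 : 0 <= d by apply: ler0n.
pose Kx := fun i => (kcount h x i)%:R : R.
pose Ky := fun i => (kcount h y i)%:R : R.
pose ax := fun i => (#|[set j | (x j != y j) && (h (x j) == i)]%SET|)%:R : R.
pose ay := fun i => (#|[set j | (x j != y j) && (h (y j) == i)]%SET|)%:R : R.
have sax : \sum_i ax i = d.
  by rewrite /ax -natr_sum (part_card _ _ (fun j => h (x j)) (fun j => x j != y j)).
have say : \sum_i ay i = d.
  by rewrite /ay -natr_sum (part_card _ _ (fun j => h (y j)) (fun j => x j != y j)).
have sumK : forall z : {ffun 'I_m -> U}, \sum_i ((kcount h z i)%:R : R) = m%:R.
  move=> z; rewrite -natr_sum (eq_bigr _ (fun i _ => @kcountE _ _ _ h z i)) (part_card _ _ (fun j => h (z j)) predT).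
  by rewrite cardsE card_ord.
have Kxa : forall i, Kx i <= Ky i + ax i.
  move=> i; rewrite /Kx /Ky /ax -natrD ler_nat !kcountE.
  apply: leq_trans (leq_card_setU _ _); apply: subset_leq_card.
  apply/fintype.subsetP => j; rewrite !inE; case: (eqVneq (x j) (y j)) => [->|ne] //=;
    by move=> ->; rewrite ?orbT.
have Kya : forall i, Ky i <= Kx i + ay i.
  move=> i; rewrite /Kx /Ky /ay -natrD ler_nat !kcountE.
  apply: leq_trans (leq_card_setU _ _); apply: subset_leq_card.
  apply/fintype.subsetP => j; rewrite !inE; case: (eqVneq (x j) (y j)) => [->|ne] //=;
    by move=> ->; rewrite ?orbT.
set Sx := \sum_i Kx i ^+ 2.
set Sy := \sum_i Ky i ^+ 2.
have Sx0 : 0 <= Sx by apply: sumr_ge0 => i _; apply: sqr_ge0.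
have Sy0 : 0 <= Sy by apply: sumr_ge0 => i _; apply: sqr_ge0.
pose w := Num.sqrt Sy.
have w0 : 0 <= w by apply: sqrtr_ge0.
have w2 : w ^+ 2 = Sy by rewrite sqr_sqrtr.
have dS : `|Sx - Sy| <= d * (2 * w + d).
  have ge0 : forall (z : {ffun 'I_m -> U}) i, 0 <= ((kcount h z i)%:R : R).
    by move=> z i; apply: ler0n.
  have ax0 : forall i, 0 <= ax i by move=> i; apply: ler0n.
  have ay0 : forall i, 0 <= ay i by move=> i; apply: ler0n.
  case: (leP Sy Sx) => hS.
    rewrite ger0_norm ?subr_ge0 //.
    have := @sq_bound R n Ky Kx ax (ge0 y) ax0 (ge0 x) Kxa.
    by rewrite sax.
  rewrite ltr0_norm ?subr_lt0 // opprB.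
  have := @sq_bound R n Kx Ky ay (ge0 x) ay0 (ge0 y) Kya.
  rewrite say => h1; apply: le_trans h1 _.
  apply: ler_wpM2l => //; rewrite lerD2r ler_pM2l // ler_sqrt //; exact: ltW.
set M := m%:R * (m%:R - 1) : R.
have collE : forall z : {ffun 'I_m -> U},
    collstat R h z = (\sum_i ((kcount h z i)%:R : R) ^+ 2 - m%:R) / M.
  move=> z; rewrite /collstat -mulr_suml; congr (_ / _).
  rewrite -[in RHS](sumK z) -sumrB; apply: eq_bigr => i _; ring.
have M0 : 0 < M by rewrite /M; nra.
have SyE : \sum_i ((kcount h y i)%:R : R) ^+ 2 = Sy by [].
have SxE : \sum_i ((kcount h x i)%:R : R) ^+ 2 = Sx by [].
have cyb : collstat R h y <= 2 * P.
  move: yA; rewrite /Aset /= => /ler_normlP [_ h1].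
  have : collstat R h y / P <= 2 by lra.
  by rewrite ler_pdivrMr.
have Syb : Sy <= 2 * P * M + m%:R.
  move: cyb; rewrite collE SyE ler_pdivrMr //.
  - by move=> h1; lra.
have -> : collstat R h x - collstat R h y = (Sx - Sy) / M.
  by rewrite !collE SxE SyE; ring.
have Mi0 : 0 <= M^-1 by rewrite invr_ge0; exact: ltW.
rewrite normrM (ger0_norm Mi0).
rewrite -r2.
apply: le_trans _ (@final_arith R m%:R n%:R P eps s r d w sg heps0 hs _ d0 w0 (ltW sg0) sg2 dsg _ Pn P0 em nm _).
- by apply: ler_wpM2r; [rewrite invr_ge0; exact: ltW|].
- lra.
- by rewrite w2.
- lra.
Qed.
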